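(* Let $K\subset\mathbb{R}^3$ be finite, and let $(A^j)$ be the sequence of sets produced by the finitely extremal points elimination algorithm applied to $K$. Then for every $j$, every extremal point of $M^j=(A^j)^{hv}$ is a finitely extremal point of $A^j$.
   Context: Grid: let $F\subset\mathbb{R}^2$ be the projection of $K$ to the $(x,y)$-plane and $H$ the set of $z$-coordinates of points of $K$. The first derived set $F^1$ is the set of points of $\mathbb{R}^2\setminus F$ that are the single intersection point of two segments with endpoints in $F$. The grid is $G=(F\cup F^1)\times H$. hv-hull: for finite $A\subset\mathbb{R}^3$ with set of heights $h_1<\dots<h_m$ and $\pi$ the projection to the $(x,y)$-plane, $A^{h}=\bigcup_i co(A\cap\{z=h_i\})$ and $A^{hv}=A^h\cup\bigcup_{j}\big(\pi(co(A\cap\{z=h_j\}))\cap\pi(co(A\cap\{z=h_{j+1}\}))\big)\times[h_j,h_{j+1}]$. Finitely extremal: for finite $A$, a point $p\in A$ is $A$-finitely extremal if neither (i) there are $p_1,p_2\in A$ on the same vertical line (parallel to the $z$ axis) with $p$ in the relative interior of $[p_1,p_2]$, nor (ii) $p$ lies in the convex hull of $\{q\in A\setminus\{p\}: z(q)=z(p)\}$. Algorithm: set $A^0=G$; while the set of finitely extremal points of $A^k$ is not contained in $K$, choose a finitely extremal point $p_k$ of $A^k$ with $p_k\notin K$ and set $A^{k+1}=A^k\setminus\{p_k\}$. For $M\subset\mathbb{R}^3$, $p\in M$ is extremal if no relatively open horizontal (contained in a plane $\{z=c\}$) or vertical segment contained in $M$ contains $p$. *)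

(* Defs.v *)
From Stdlib Require Import Reals List.
Open Scope R_scope.

Definition pt2 : Type := (R * R)%type.
Definition pt3 : Type := (pt2 * R)%type.

Definition proj (p : pt3) : pt2 := fst p.
Definition zc (p : pt3) : R := snd p.

Definition finite3 (K : pt3 -> Prop) : Prop :=
  exists l : list pt3, forall p, K p -> In p l.

Definition seg2 (a b q : pt2) : Prop :=
  exists t, 0 <= t <= 1 /\
    fst q = fst a + t * (fst b - fst a) /\ snd q = snd a + t * (snd b - snd a).

Definition Fset (K : pt3 -> Prop) (q : pt2) : Prop := exists p, K p /\ proj p = q.
Definition Hset (K : pt3 -> Prop) (h : R) : Prop := exists p, K p /\ zc p = h.

Definition F1set (K : pt3 -> Prop) (q : pt2) : Prop :=
  ~ Fset K q /\
  exists a b c d, Fset K a /\ Fset K b /\ Fset K c /\ Fset K d /\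
    (forall r, (seg2 a b r /\ seg2 c d r) <-> r = q).

Definition grid (K : pt3 -> Prop) (p : pt3) : Prop :=
  (Fset K (proj p) \/ F1set K (proj p)) /\ Hset K (zc p).

Definition conv2 (S : pt2 -> Prop) (q : pt2) : Prop :=
  exists l : list (R * pt2),
    Forall (fun wa => 0 <= fst wa /\ S (snd wa)) l /\
    fold_right (fun wa acc => fst wa + acc) 0 l = 1 /\
    fold_right (fun wa acc => fst wa * fst (snd wa) + acc) 0 l = fst q /\
    fold_right (fun wa acc => fst wa * snd (snd wa) + acc) 0 l = snd q.

Definition slice (A : pt3 -> Prop) (h : R) (q : pt2) : Prop := A (q, h).

Definition consecutive_heights (A : pt3 -> Prop) (h h' : R) : Prop :=
  Hset A h /\ Hset A h' /\ h < h' /\ ~ (exists h'', Hset A h'' /\ h < h'' < h').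

Definition hv_hull (A : pt3 -> Prop) (p : pt3) : Prop :=
  conv2 (slice A (zc p)) (proj p) \/
  exists h h', consecutive_heights A h h' /\ h <= zc p <= h' /\
    conv2 (slice A h) (proj p) /\ conv2 (slice A h') (proj p).

Definition fin_extremal (A : pt3 -> Prop) (p : pt3) : Prop :=
  A p /\
  ~ (exists p1 p2, A p1 /\ A p2 /\ proj p1 = proj p /\ proj p2 = proj p /\
       zc p1 < zc p < zc p2) /\
  ~ conv2 (fun q => A (q, zc p) /\ (q, zc p) <> p) (proj p).

Definition lerp3 (a b : pt3) (t : R) : pt3 :=
  ((fst (proj a) + t * (fst (proj b) - fst (proj a)),
    snd (proj a) + t * (snd (proj b) - snd (proj a))),
   zc a + t * (zc b - zc a)).

Definition extremal (M : pt3 -> Prop) (p : pt3) : Prop :=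
  M p /\
  ~ (exists a b, a <> b /\ (zc a = zc b \/ proj a = proj b) /\
       (forall t, 0 < t < 1 -> M (lerp3 a b t)) /\
       (exists t, 0 < t < 1 /\ p = lerp3 a b t)).

(* The sets A^j reachable by the finitely extremal points elimination
   algorithm applied to K (over all possible choices of p_k). *)
Inductive alg_set (K : pt3 -> Prop) : (pt3 -> Prop) -> Prop :=
| alg_init : alg_set K (grid K)
| alg_next (A : pt3 -> Prop) (p : pt3) :
    alg_set K A ->
    ~ (forall q, fin_extremal A q -> K q) ->
    fin_extremal A p -> ~ K p ->
    alg_set K (fun q => A q /\ q <> p).

(* Main.v *)
Require Import Defs.
From Stdlib Require Import Reals List.
From Stdlib Require Import Lra Psatz Classical.
Open Scope R_scope.

Definition sumf (g : R * pt2 -> R) (l : list (R * pt2)) : R :=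
  fold_right (fun wa acc => g wa + acc) 0 l.

Lemma sumf_cons g x l : sumf g (x :: l) = g x + sumf g l.
Proof. reflexivity. Qed.
Lemma sumf_nil g : sumf g nil = 0.
Proof. reflexivity. Qed.
Lemma sumf_app g l1 l2 : sumf g (l1 ++ l2) = sumf g l1 + sumf g l2.
Proof. induction l1; simpl app; rewrite ?sumf_cons, ?sumf_nil; [ring|rewrite IHl1; ring]. Qed.
Lemma sumf_map g h l : sumf g (map h l) = sumf (fun x => g (h x)) l.
Proof. induction l; simpl map; rewrite ?sumf_cons, ?sumf_nil; [ring|rewrite IHl; ring]. Qed.
Lemma sumf_ext g g' l : (forall x, g x = g' x) -> sumf g l = sumf g' l.
Proof. intro E; induction l; rewrite ?sumf_cons, ?sumf_nil; [ring|rewrite IHl, E; ring]. Qed.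
Lemma sumf_scale c g l : sumf (fun x => c * g x) l = c * sumf g l.
Proof. induction l; rewrite ?sumf_cons, ?sumf_nil; [ring|rewrite IHl; ring]. Qed.

Lemma conv2_iff S q : conv2 S q <-> exists l,
    Forall (fun wa => 0 <= fst wa /\ S (snd wa)) l /\
    sumf (fun wa => fst wa) l = 1 /\
    sumf (fun wa => fst wa * fst (snd wa)) l = fst q /\
    sumf (fun wa => fst wa * snd (snd wa)) l = snd q.
Proof. unfold conv2, sumf; tauto. Qed.

Lemma conv2_get S q : conv2 S q -> exists l,
    Forall (fun wa => 0 <= fst wa /\ S (snd wa)) l /\
    sumf (fun wa => fst wa) l = 1 /\
    sumf (fun wa => fst wa * fst (snd wa)) l = fst q /\
    sumf (fun wa => fst wa * snd (snd wa)) l = snd q.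
Proof. apply conv2_iff. Qed.

Lemma sumf_nonneg (S : pt2 -> Prop) l :
  Forall (fun wa => 0 <= fst wa /\ S (snd wa)) l -> 0 <= sumf (fun wa => fst wa) l.
Proof. induction 1; rewrite ?sumf_cons, ?sumf_nil; [lra|destruct H; lra]. Qed.

Lemma sumf_zero (S : pt2 -> Prop) c l :
  Forall (fun wa => 0 <= fst wa /\ S (snd wa)) l -> sumf (fun wa => fst wa) l = 0 ->
  sumf (fun wa => fst wa * c wa) l = 0.
Proof.
  induction 1; rewrite ?sumf_cons, ?sumf_nil; intros; [lra|].
  destruct H. pose proof (sumf_nonneg S l H0).
  assert (fst x = 0) by lra. rewrite H4, IHForall by lra. ring.
Qed.

Lemma conv2_single (S : pt2 -> Prop) q : S q -> conv2 S q.
Proof.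
  intro H; apply conv2_iff; exists ((1, q) :: nil); repeat split;
    rewrite ?sumf_cons, ?sumf_nil; simpl; try ring.
  constructor; [simpl; split; [lra|auto]|constructor].
Qed.

Lemma conv2_mono (S S' : pt2 -> Prop) q : (forall u, S u -> S' u) -> conv2 S q -> conv2 S' q.
Proof.
  intros I H; apply conv2_get in H; apply conv2_iff.
  destruct H as [l [F H]]; exists l; split; auto.
  eapply Forall_impl; [|exact F]; simpl; intros a [? ?]; auto.
Qed.

Lemma conv2_convex (S : pt2 -> Prop) a r t : conv2 S a -> conv2 S r -> 0 <= t <= 1 ->
  conv2 S ((1-t)*fst a + t*fst r, (1-t)*snd a + t*snd r).
Proof.
  intros Ha Hr Ht; apply conv2_get in Ha; apply conv2_get in Hr; apply conv2_iff.
  destruct Ha as [l1 [F1 [W1 [X1 Y1]]]]; destruct Hr as [l2 [F2 [W2 [X2 Y2]]]].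
  exists (map (fun wa => ((1-t)*fst wa, snd wa)) l1 ++ map (fun wa => (t*fst wa, snd wa)) l2).
  repeat split; rewrite ?sumf_app, ?sumf_map.
  - apply Forall_app; split; apply Forall_map.
    + eapply Forall_impl; [|exact F1]; simpl; intros w [? ?]; split; auto; nra.
    + eapply Forall_impl; [|exact F2]; simpl; intros w [? ?]; split; auto; nra.
  - rewrite (sumf_ext _ (fun x => (1-t) * fst x)) by (intros; simpl; ring).
    rewrite (sumf_ext (fun x => fst ((fun wa => (t * fst wa, snd wa)) x)) (fun x => t * fst x)) by (intros; simpl; ring).
    rewrite (sumf_scale (1-t) (fun wa => fst wa)), (sumf_scale t (fun wa => fst wa)), W1, W2; ring.
  - rewrite (sumf_ext _ (fun x => (1-t) * (fst x * fst (snd x)))) by (intros; simpl; ring).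
    rewrite (sumf_ext _  (fun x => t * (fst x * fst (snd x))) l2) by (intros; simpl; ring).
    rewrite (sumf_scale (1-t) (fun wa => fst wa * fst (snd wa))), (sumf_scale t (fun wa => fst wa * fst (snd wa))), X1, X2; simpl; ring.
  - rewrite (sumf_ext _ (fun x => (1-t) * (fst x * snd (snd x)))) by (intros; simpl; ring).
    rewrite (sumf_ext _  (fun x => t * (fst x * snd (snd x))) l2) by (intros; simpl; ring).
    rewrite (sumf_scale (1-t) (fun wa => fst wa * snd (snd wa))), (sumf_scale t (fun wa => fst wa * snd (snd wa))), Y1, Y2; simpl; ring.
Qed.

Lemma conv2_decomp (S : pt2 -> Prop) : forall l q,
  Forall (fun wa => 0 <= fst wa /\ S (snd wa)) l ->
  sumf (fun wa => fst wa) l = 1 ->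
  sumf (fun wa => fst wa * fst (snd wa)) l = fst q ->
  sumf (fun wa => fst wa * snd (snd wa)) l = snd q ->
  S q \/ exists a r w, S a /\ conv2 S r /\ 0 < w < 1 /\
     fst q = w * fst a + (1-w) * fst r /\ snd q = w * snd a + (1-w) * snd r.
Proof.
  induction l as [|[w1 a1] rest IH]; intros q F W X Y.
  - rewrite sumf_nil in W; lra.
  - rewrite sumf_cons in W, X, Y; simpl in W, X, Y.
    inversion F as [|? ? [Hw1 Sa1] Frest]; subst.
    simpl in Hw1, Sa1. pose proof (sumf_nonneg S rest Frest) as Hn.
    destruct (Req_dec w1 0) as [E0|N0].
    + subst; apply IH; auto; lra.
    + destruct (Req_dec w1 1) as [E1|N1].
      * subst. assert (Z: sumf (fun wa => fst wa) rest = 0) by lra.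
        pose proof (sumf_zero S (fun wa => fst (snd wa)) rest Frest Z).
        pose proof (sumf_zero S (fun wa => snd (snd wa)) rest Frest Z).
        left. destruct q as [qx qy]; destruct a1 as [ax ay]; simpl in *.
        replace qx with ax by lra. replace qy with ay by lra. exact Sa1.
      * right. set (s := sumf (fun wa => fst wa) rest) in *.
        assert (Hs : 0 < s) by lra.
        exists a1, (sumf (fun wa => fst wa * fst (snd wa)) rest / s,
                    sumf (fun wa => fst wa * snd (snd wa)) rest / s), w1.
        repeat split; auto; try lra; simpl.
        -- apply conv2_iff. exists (map (fun wa => (fst wa / s, snd wa)) rest).
           repeat split; rewrite ?sumf_map; simpl.
           ++ apply Forall_map; eapply Forall_impl; [|exact Frest]; simpl.
              intros u [? ?]; split; auto. unfold Rdiv; apply Rmult_le_pos; auto.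
              left; apply Rinv_0_lt_compat; auto.
           ++ rewrite (sumf_ext _ (fun x => /s * fst x)) by (intros; simpl; unfold Rdiv; ring).
              rewrite (sumf_scale (/s) (fun wa => fst wa)); fold s; field; lra.
           ++ rewrite (sumf_ext _ (fun x => /s * (fst x * fst (snd x)))) by (intros; simpl; unfold Rdiv; ring).
              rewrite (sumf_scale (/s) (fun wa => fst wa * fst (snd wa))); unfold Rdiv; ring.
           ++ rewrite (sumf_ext _ (fun x => /s * (fst x * snd (snd x)))) by (intros; simpl; unfold Rdiv; ring).
              rewrite (sumf_scale (/s) (fun wa => fst wa * snd (snd wa))); unfold Rdiv; ring.
        -- rewrite <- X. replace (1 - w1) with s by lra. field. lra.
        -- rewrite <- Y. replace (1 - w1) with s by lra. field. lra.
Qed.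

Lemma conv2_seg (S : pt2 -> Prop) q : conv2 S q -> ~ S q ->
  exists a r w, a <> r /\ 0 < w < 1 /\
    fst q = w * fst a + (1-w) * fst r /\ snd q = w * snd a + (1-w) * snd r /\
    forall t, 0 <= t <= 1 -> conv2 S ((1-t)*fst a + t*fst r, (1-t)*snd a + t*snd r).
Proof.
  intros C N. pose proof C as C0. apply conv2_get in C.
  destruct C as [l [F [W [X Y]]]].
  destruct (conv2_decomp S l q F W X Y) as [Sq|[a [r [w [Sa [Cr [Hw [Ex Ey]]]]]]]].
  - contradiction.
  - exists a, r, w; repeat split; auto; try lra.
    + intro E; subst r. apply N. destruct q as [qx qy]; destruct a as [ax ay]; simpl in *.
      replace qx with ax by lra; replace qy with ay by lra; auto.
    + intros t Ht; apply conv2_convex; auto. apply conv2_single; auto.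
Qed.

Definition badseg (M : pt3 -> Prop) (p : pt3) : Prop :=
  exists a b, a <> b /\ (zc a = zc b \/ proj a = proj b) /\
       (forall t, 0 < t < 1 -> M (lerp3 a b t)) /\
       (exists t, 0 < t < 1 /\ p = lerp3 a b t).

Lemma horiz_bad (M : pt3 -> Prop) (S : pt2 -> Prop) x y z :
  conv2 S (x, y) -> ~ S (x, y) -> (forall q, conv2 S q -> M (q, z)) ->
  badseg M ((x, y), z).
Proof.
  intros C N HM.
  destruct (conv2_seg S (x,y) C N) as [a [r [w [Nar [Hw [Ex [Ey Hc]]]]]]].
  simpl in Ex, Ey.
  exists (a, z), (r, z); repeat split.
  - intro E; inversion E; auto.
  - left; reflexivity.
  - intros t Ht. unfold lerp3, proj, zc; simpl.
    replace (z + t * (z - z)) with z by ring.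
    replace (fst a + t * (fst r - fst a), snd a + t * (snd r - snd a)) with
      ((1-t)*fst a + t*fst r, (1-t)*snd a + t*snd r) by (f_equal; ring).
    apply HM, Hc; lra.
  - exists (1 - w); split; [lra|]. unfold lerp3, proj, zc; simpl.
    f_equal; [f_equal|]; try lra; ring.
Qed.

Lemma vert_bad (M : pt3 -> Prop) (q : pt2) h h' z :
  h < z < h' -> (forall u, h <= u <= h' -> M (q, u)) -> badseg M (q, z).
Proof.
  intros Hz HM. exists (q, h), (q, h'); repeat split.
  - intro E; inversion E; lra.
  - right; reflexivity.
  - intros t Ht. unfold lerp3, proj, zc; simpl. destruct q as [qx qy]; simpl.
    replace (qx + t * (qx - qx)) with qx by ring.
    replace (qy + t * (qy - qy)) with qy by ring.
    apply HM; nra.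
  - set (t0 := (z - h) / (h' - h)).
    assert (Et : t0 * (h' - h) = z - h) by (unfold t0; field; lra).
    exists t0; split; [nra|].
    unfold lerp3, proj, zc; simpl. destruct q as [qx qy]; simpl.
    f_equal; [f_equal|]; nra.
Qed.

Lemma list_max (L : list R) (P : R -> Prop) : (exists x, In x L /\ P x) ->
  exists m, In m L /\ P m /\ forall y, In y L -> P y -> y <= m.
Proof.
  induction L as [|a L IH]; intros [x [Hx Px]]; [destruct Hx|].
  destruct (classic (exists x, In x L /\ P x)) as [Ex|Nx].
  - destruct (IH Ex) as [m [Im [Pm Bm]]].
    destruct (classic (P a /\ m < a)) as [[Pa Lt]|Nn].
    + exists a; repeat split; auto; [left; auto|]. intros y [<-|Iy] Py; [lra|].
      specialize (Bm y Iy Py); lra.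
    + exists m; repeat split; auto; [right; auto|]. intros y [<-|Iy] Py; auto.
      destruct (Rle_dec a m); auto. exfalso; apply Nn; split; auto; lra.
  - destruct Hx as [<-|Hx]; [|exfalso; apply Nx; eauto].
    exists a; repeat split; auto; [left; auto|]. intros y [<-|Iy] Py; [lra|].
    exfalso; apply Nx; eauto.
Qed.

Lemma list_min (L : list R) (P : R -> Prop) : (exists x, In x L /\ P x) ->
  exists m, In m L /\ P m /\ forall y, In y L -> P y -> m <= y.
Proof.
  intros [x [Hx Px]].
  destruct (list_max (map Ropp L) (fun u => P (- u))) as [m [Im [Pm Bm]]].
  - exists (- x); split; [apply in_map; auto| rewrite Ropp_involutive; auto].
  - apply in_map_iff in Im; destruct Im as [m' [E Im]]; subst m.
    exists m'; split; auto; split; [rewrite Ropp_involutive in Pm; auto|].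
    intros y Iy Py. assert (- y <= - m'); [|lra].
    apply Bm; [apply in_map; auto| rewrite Ropp_involutive; auto].
Qed.

Lemma alg_inv K A : alg_set K A ->
  (forall q, A q -> grid K q) /\
  (forall a b h, A a -> A b -> proj a = proj b -> zc a <= h <= zc b -> Hset K h -> A (proj a, h)).
Proof.
  induction 1 as [|A p HA [IG IV] Hn Hp HpK].
  - split; auto. intros a b h Ha Hb Ep Hh HK. unfold grid in *; simpl. split; [apply Ha|auto].
  - split.
    + intros q [Aq _]; auto.
    + intros a b h [Aa Na] [Ab Nb] Ep Hh HK. split; [apply (IV a b h); auto|].
      intro E. destruct (Req_dec h (zc a)) as [Ea|Na'].
      { apply Na; rewrite <- E, Ea; destruct a; reflexivity. }
      destruct (Req_dec h (zc b)) as [Eb|Nb'].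
      { apply Nb; rewrite <- E, Ep, Eb; destruct b; reflexivity. }
      destruct Hp as [_ [Hp _]]. apply Hp. exists a, b; rewrite <- E; simpl.
      repeat split; auto; lra.
Qed.

Theorem lemma5p12 (K : pt3 -> Prop) (A : pt3 -> Prop) :
  finite3 K -> alg_set K A ->
  forall p, extremal (hv_hull A) p -> fin_extremal A p.
Proof.
  intros [l Hl] Halg p [Mp Hnot].
  change (~ badseg (hv_hull A) p) in Hnot.
  destruct (alg_inv _ _ Halg) as [IG IV].
  assert (HL : forall h, Hset A h -> In h (map zc l)).
  { intros h [q [Aq Eq]]. destruct (IG q Aq) as [_ [k [Kk Ek]]].
    rewrite <- Eq, <- Ek; apply in_map; apply Hl; auto. }
  assert (HK : forall h, Hset A h -> Hset K h).
  { intros h [q [Aq Eq]]. destruct (IG q Aq) as [_ Hk]. rewrite <- Eq; auto. }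
  destruct p as [[x y] z].
  assert (C : conv2 (slice A z) (x, y)).
  { destruct Mp as [C | [h [h' [Hc [Hr [C1 C2]]]]]]; simpl in *; [exact C|].
    destruct (Req_dec z h) as [E|N1]; [subst; exact C1|].
    destruct (Req_dec z h') as [E|N2]; [subst; exact C2|].
    exfalso; apply Hnot. apply (vert_bad _ (x,y) h h'); [lra|].
    intros u Hu; unfold hv_hull; right; exists h, h'; simpl; auto. }
  assert (Ap : A ((x, y), z)).
  { destruct (classic (A ((x, y), z))) as [|n]; auto. exfalso; apply Hnot.
    apply (horiz_bad _ (slice A z)); auto.
    intros q Hq; unfold hv_hull; left; simpl; exact Hq. }
  unfold fin_extremal; simpl. split; [exact Ap|split].
  - intros [p1 [p2 [A1 [A2 [P1 [P2 [Z1 Z2]]]]]]].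
    assert (Hz : Hset A z) by (exists ((x,y),z); split; auto).
    destruct (list_max (map zc l) (fun h => Hset A h /\ zc p1 <= h < z)) as [h [_ [[Hh Bh] Mh]]].
    { exists (zc p1); split; [apply HL; exists p1; auto|split; [exists p1; auto|lra]]. }
    destruct (list_min (map zc l) (fun h => Hset A h /\ z < h <= zc p2)) as [h' [_ [[Hh' Bh'] Mh']]].
    { exists (zc p2); split; [apply HL; exists p2; auto|split; [exists p2; auto|lra]]. }
    assert (Ah : A ((x, y), h)).
    { rewrite <- P1. apply (IV p1 ((x,y),z)); auto; simpl; auto; lra. }
    assert (Ah' : A ((x, y), h')).
    { apply (IV ((x,y),z) p2 h'); auto; simpl; auto; lra. }
    apply Hnot. apply (vert_bad _ (x,y) h h'); [lra|].
    intros u Hu; unfold hv_hull; right; simpl.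
    destruct (Rle_dec u z).
    + exists h, z; repeat split; auto; try lra.
      * intros [h'' [H1 H2]]. specialize (Mh h'' (HL h'' H1)). assert (h'' <= h) by (apply Mh; split; auto; lra). lra.
      * apply conv2_single; exact Ah.
    + exists z, h'; repeat split; auto; try lra.
      * intros [h'' [H1 H2]]. specialize (Mh' h'' (HL h'' H1)). assert (h' <= h'') by (apply Mh'; split; auto; lra). lra.
      * apply conv2_single; exact Ah'.
  - intro Cc. apply Hnot.
    apply (horiz_bad _ (fun q => A (q, z) /\ (q, z) <> ((x, y), z))); auto.
    + intros [_ n]; apply n; reflexivity.
    + intros q Hq; unfold hv_hull; left; simpl.
      eapply conv2_mono; [|exact Hq]. intros u [? ?]; exact H.
Qed.
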